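(* Let $\tau$ be an infinite cardinal and let $\mathcal U$ be a uniformity on a space $X$ with $w(\mathcal U)\le\tau$. There is no continuous and effective action on $X$ of a topological group $G$ with $\psi(G)>\tau$ for which $\mathcal U$ is an equiuniformity on $X$.
   Context: All spaces are Tychonoff. Uniformities are families of open covers; $w(\mathcal U)$ is the least cardinality of a base. For a continuous action of $G$ on $X$, $\mathcal U$ is an equiuniformity if it is saturated ($gu\in\mathcal U$ for $g\in G,u\in\mathcal U$) and bounded (for each $u\in\mathcal U$ there exist a neighborhood $O$ of the unit and $v\in\mathcal U$ with $\{OV:V\in v\}$ refining $u$). An action is effective if only the unit fixes every point. $\psi(G)$ is the pseudocharacter of $G$. *)

(* Defs.v *)
From mathcomp Require Import all_boot all_algebra.
From mathcomp Require Import all_classical all_reals all_analysis.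

Set Implicit Arguments.
Unset Strict Implicit.
Unset Printing Implicit Defensive.

Local Open Scope classical_set_scope.
Local Open Scope card_scope.

Definition tychonoff_space (X : topologicalType) : Prop :=
  completely_regular_space X /\ hausdorff_space X.

Definition open_cover (X : topologicalType) (u : set (set X)) : Prop :=
  (forall V, u V -> open V) /\ \bigcup_(V in u) V = setT.

Definition refines (X : Type) (u v : set (set X)) : Prop :=
  forall A, u A -> exists2 B, v B & A `<=` B.

Definition star (X : Type) (A : set X) (u : set (set X)) : set X :=
  \bigcup_(V in [set V | u V /\ V `&` A !=set0]) V.

Definition star_refines (X : Type) (u v : set (set X)) : Prop :=
  refines ((fun V => star V u) @` u) v.

Definition uniformity (X : topologicalType) (U : set (set (set X))) : Prop :=
  U !=set0 /\
  [/\ (forall u, U u -> open_cover u),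
      (forall u v, U u -> open_cover v -> refines u v -> U v),
      (forall u v, U u -> U v -> exists w, (U w /\ refines w u /\ refines w v)),
      (forall u, U u -> exists2 v, U v & star_refines v u) &
      (* compatibility with the topology of X *)
      (forall (x : X) (O : set X), open O -> O x ->
          exists2 u, U u & star [set x] u `<=` O)].

Definition uniformity_base (X : Type) (U B : set (set (set X))) : Prop :=
  B `<=` U /\ forall u, U u -> exists2 b, B b & refines b u.

Definition weight_le (X : Type) (U : set (set (set X))) (T : Type) : Prop :=
  exists2 B, uniformity_base U B & B #<= [set: T].

Definition is_topological_group (G : topologicalType)
    (mul : G -> G -> G) (inv : G -> G) (one : G) : Prop :=
  [/\ (forall a b c, mul a (mul b c) = mul (mul a b) c),
      (forall a, mul one a = a),
      (forall a, mul (inv a) a = one),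
      continuous (fun p : G * G => mul p.1 p.2) &
      continuous inv].

Definition pseudocharacter_le (G : topologicalType) (T : Type) : Prop :=
  forall x : G, exists F : set (set G),
    [/\ F #<= [set: T], (forall A, F A -> open A) & \bigcap_(A in F) A = [set x]].

Definition pseudocharacter_gt (G : topologicalType) (T : Type) : Prop :=
  ~ pseudocharacter_le G T.

Definition is_action (G X : Type) (mul : G -> G -> G) (one : G)
    (act : G -> X -> X) : Prop :=
  (forall x, act one x = x) /\ (forall g h x, act (mul g h) x = act g (act h x)).

Definition continuous_action (G X : topologicalType) (act : G -> X -> X) : Prop :=
  continuous (fun p : G * X => act p.1 p.2).

Definition effective_action (G X : Type) (one : G) (act : G -> X -> X) : Prop :=
  forall g, (forall x, act g x = x) -> g = one.

Definition act_set (G X : Type) (act : G -> X -> X) (O : set G) (V : set X) : set X :=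
  [set z | exists g y, [/\ O g, V y & z = act g y]].

Definition saturated (G X : Type) (act : G -> X -> X) (U : set (set (set X))) : Prop :=
  forall g u, U u -> U ((fun V => act g @` V) @` u).

Definition bounded (G X : topologicalType) (one : G) (act : G -> X -> X)
    (U : set (set (set X))) : Prop :=
  forall u, U u -> exists O, exists v,
    [/\ nbhs one O, U v & refines ((fun V => act_set act O V) @` v) u].

Definition equiuniformity (G X : topologicalType) (one : G) (act : G -> X -> X)
    (U : set (set (set X))) : Prop :=
  uniformity U /\ saturated act U /\ bounded one act U.

(* Main.v *)
Require Import Defs.
From mathcomp Require Import all_boot all_algebra.
From mathcomp Require Import all_classical all_reals all_analysis.

Local Open Scope classical_set_scope.

Theorem corollary3p13
  (tau : Type) (htau : infinite_set [set: tau])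
  (X : topologicalType) (hX : tychonoff_space X)
  (U : set (set (set X))) (hU : uniformity U) (hw : weight_le U tau) :
  ~ exists (G : topologicalType) (mul : G -> G -> G) (inv : G -> G) (one : G)
      (act : G -> X -> X),
      [/\ tychonoff_space G /\ is_topological_group mul inv one,
          is_action mul one act /\ continuous_action act,
          effective_action one act, equiuniformity one act U &
          pseudocharacter_gt G tau].
Proof.
move=> [G [mul [inv [one [act [[_ [massoc m1l minvl mcont icont]]
  [[a1 aM] _] eff [_ [_ bnd]] psi]]]]]].
apply: psi.
have [_ [Ucov _ _ _ Ucomp]] := hU.
have [B [BU Bref] Bcard] := hw.
have mr : forall a, mul a (inv a) = one.
  move=> a; set b := inv a; set c := inv b.
  rewrite -[mul a b]m1l -(minvl b) -/c -massoc (massoc b a b).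
  by rewrite /b minvl m1l.
have m1r : forall a, mul a one = a.
  by move=> a; rewrite -(minvl a) massoc mr m1l.
have hP : forall b : set (set X), exists O : set G,
    nbhs one O /\ (B b -> forall g x, O g -> star [set x] b (act g x)).
  move=> b; have [Bb|nBb] := pselect (B b); last first.
    by exists setT; split => //; exact: filterT.
  have [Ob [v [nO Uv rv]]] := bnd b (BU _ Bb).
  exists Ob; split => // _ g x Og.
  have [_ covv] := Ucov _ Uv.
  have : [set: X] x by [].
  rewrite -covv => -[V vV Vx].
  have [W bW sW] := rv (act_set act Ob V) (ex_intro2 _ _ V vV erefl).
  have O1 : Ob one := nbhs_singleton nO.
  exists W.
    split => //; exists x; split => //.
    by apply: sW; exists one, x; split => //; rewrite a1.
  by apply: sW; exists g, x.
have [Of HO] := choice hP.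
pose F := (fun b => (Of b)°) @` B.
have Fcard : (F #<= [set: tau])%card := card_le_trans (card_image_le _ _) Bcard.
have Fone : \bigcap_(A in F) A = [set one].
  rewrite eqEsubset; split; last first.
    by move=> _ -> _ [b _ <-]; exact: (HO b).1.
  move=> g Hg; apply: eff => x.
  have [_ hXh] := hX; apply: hXh; rewrite /cluster /meets /= => C A nC nA.
  exists (act g x); split; first by apply: nbhs_singleton.
  have oA : open A° := open_interior A.
  have [u Uu su] := Ucomp x _ oA nA.
  have [b Bb rb] := Bref u Uu.
  apply: interior_subset; apply: su.
  have := (HO b).2 Bb g x (interior_subset (Hg _ (ex_intro2 _ _ b Bb erefl))).
  move=> [W [bW Wx] Wg].
  have [W' uW' sW'] := rb W bW.
  exists W'; last exact: sW'.
  split => //; case: Wx => y [Wy Hy]; exists y; split => //; exact: sW'.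
move=> x; exists ((fun A => mul x @` A) @` F); split.
- exact: card_le_trans (card_image_le _ _) Fcard.
- move=> _ [A [b Bb <-] <-].
  have -> : mul x @` (Of b)° = mul (inv x) @^-1` (Of b)°.
    rewrite eqEsubset; split.
      by move=> _ [a Aa <-]; rewrite /preimage /= massoc minvl m1l.
    move=> z Az; exists (mul (inv x) z) => //.
    by rewrite massoc mr m1l.
  have cm : continuous (mul (inv x)).
    move=> z.
    apply: (@continuous_comp _ _ _ (fun z => (inv x, z)) (fun p : G * G => mul p.1 p.2)).
      by apply: cvg_pair; [exact: cvg_cst | exact: cvg_id].
    exact: mcont.
  by move/continuousP: cm; apply; exact: open_interior.
- rewrite eqEsubset; split.
    move=> z Hz.
    have : (\bigcap_(A in F) A) (mul (inv x) z).
      move=> A FA; have [a Aa az] := Hz _ (ex_intro2 _ _ A FA erefl).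
      by rewrite -az massoc minvl m1l.
    rewrite Fone => /= H; rewrite /set1 /=.
    by rewrite -[z]m1l -(mr x) -massoc H m1r.
  move=> _ -> _ [A FA <-]; exists one; last exact: m1r.
  by case: FA => b _ <-; have := (HO b).1.
Qed.
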